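(* Let $\mathbb{X},\mathbb{Y}$ be real normed linear spaces and $T\in\mathbb{B}(\mathbb{X},\mathbb{Y})$ such that: (i) $M_T=\{\pm x_0\}$ for some $x_0\in S_{\mathbb{X}}$; (ii) $Tx_0$ is a smooth point of $\mathbb{Y}$; (iii) every norming sequence $\{x_n\}$ for $T$ has a subsequence converging (in norm) to $ax_0$ for some $a\in\mathbb{R}$ with $|a|=1$. Then $T$ is a smooth point of $\mathbb{B}(\mathbb{X},\mathbb{Y})$.
   Context: All spaces are real; $\mathbb{B}(\mathbb{X},\mathbb{Y})$ has the operator norm; $S_{\mathbb{X}}$ is the unit sphere; $M_T=\{x\in S_{\mathbb{X}}:\|Tx\|=\|T\|\}$. A norming sequence for $T$ is $\{x_n\}\subseteq S_{\mathbb{X}}$ with $\|Tx_n\|\to\|T\|$. A nonzero element $x$ of a normed space $\mathbb{Z}$ is smooth if there is a unique $f\in\mathbb{Z}^*$ with $\|f\|=1$ and $f(x)=\|x\|$. *)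

(* Defs.v *)
From Stdlib Require Import Reals Lra Classical ClassicalEpsilon.
Open Scope R_scope.

(* Supremum of a set of reals; defaults to 0 if the set is empty or unbounded. *)
Definition Rsup (E : R -> Prop) : R :=
  match excluded_middle_informative (bound E /\ exists x, E x) with
  | left H => proj1_sig (completeness E (proj1 H) (proj2 H))
  | right _ => 0
  end.

Record NormedSpace := {
  carrier :> Type;
  vadd : carrier -> carrier -> carrier;
  vscal : R -> carrier -> carrier;
  vzero : carrier;
  vnorm : carrier -> R;
  vadd_assoc : forall u v w, vadd u (vadd v w) = vadd (vadd u v) w;
  vadd_comm : forall u v, vadd u v = vadd v u;
  vadd_zero : forall u, vadd u vzero = u;
  vadd_opp : forall u, vadd u (vscal (-1) u) = vzero;
  vscal_one : forall u, vscal 1 u = u;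
  vscal_assoc : forall a b u, vscal a (vscal b u) = vscal (a * b) u;
  vscal_distr_l : forall a u v, vscal a (vadd u v) = vadd (vscal a u) (vscal a v);
  vscal_distr_r : forall a b u, vscal (a + b) u = vadd (vscal a u) (vscal b u);
  vnorm_nonneg : forall u, 0 <= vnorm u;
  vnorm_zero : forall u, vnorm u = 0 <-> u = vzero;
  vnorm_scal : forall a u, vnorm (vscal a u) = Rabs a * vnorm u;
  vnorm_triangle : forall u v, vnorm (vadd u v) <= vnorm u + vnorm v
}.

Arguments vadd {n}. Arguments vscal {n}. Arguments vzero {n}. Arguments vnorm {n}.

Definition vsub {X : NormedSpace} (u v : X) : X := vadd u (vscal (-1) v).

(* ---- Generic smoothness, for a normed space presented by a carrier V,
   operations, a norm and a domain predicate (the elements of the space). *)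
Section Generic.
Variables (V : Type) (add : V -> V -> V) (scal : R -> V -> V) (zero : V)
          (norm : V -> R) (dom : V -> Prop).

Definition lin_functional (f : V -> R) : Prop :=
  (forall u v, dom u -> dom v -> f (add u v) = f u + f v) /\
  (forall a u, dom u -> f (scal a u) = a * f u).

Definition bdd_functional (f : V -> R) : Prop :=
  exists C, forall v, dom v -> Rabs (f v) <= C * norm v.

Definition dual_norm (f : V -> R) : R :=
  Rsup (fun r => exists v, dom v /\ norm v <= 1 /\ r = Rabs (f v)).

Definition support_functional (f : V -> R) (x : V) : Prop :=
  lin_functional f /\ bdd_functional f /\ dual_norm f = 1 /\ f x = norm x.

(* x is smooth: nonzero element of the space with a unique supporting
   functional (uniqueness as elements of the dual, i.e. on the domain). *)
Definition smooth_gen (x : V) : Prop :=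
  dom x /\ x <> zero /\
  exists f, support_functional f x /\
    forall g, support_functional g x -> forall v, dom v -> g v = f v.
End Generic.

Definition smooth_point (Y : NormedSpace) (y : Y) : Prop :=
  smooth_gen Y vadd vscal vzero vnorm (fun _ => True) y.

Definition bounded_linear (X Y : NormedSpace) (T : X -> Y) : Prop :=
  (forall u v, T (vadd u v) = vadd (T u) (T v)) /\
  (forall a u, T (vscal a u) = vscal a (T u)) /\
  (exists C, forall x, vnorm (T x) <= C * vnorm x).

Definition opnorm (X Y : NormedSpace) (T : X -> Y) : R :=
  Rsup (fun r => exists x : X, vnorm x <= 1 /\ r = vnorm (T x)).

Definition op_add (X Y : NormedSpace) (S T : X -> Y) : X -> Y :=
  fun x => vadd (S x) (T x).
Definition op_scal (X Y : NormedSpace) (a : R) (T : X -> Y) : X -> Y :=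
  fun x => vscal a (T x).
Definition op_zero (X Y : NormedSpace) : X -> Y := fun _ => vzero.

Definition smooth_operator (X Y : NormedSpace) (T : X -> Y) : Prop :=
  smooth_gen (X -> Y) (op_add X Y) (op_scal X Y) (op_zero X Y)
             (opnorm X Y) (bounded_linear X Y) T.

Definition norm_attainment_set (X Y : NormedSpace) (T : X -> Y) (x : X) : Prop :=
  vnorm x = 1 /\ vnorm (T x) = opnorm X Y T.

(* Main.v *)
Require Import Defs.
From Stdlib Require Import Reals Lra Classical ClassicalEpsilon FunctionalExtensionality Lia.
Open Scope R_scope.

Lemma Rsup_spec E : bound E -> (exists x, E x) -> is_lub E (Rsup E).
Proof.
  intros Hb He. unfold Rsup.
  destruct (excluded_middle_informative _) as [H|H].
  - destruct (completeness E (proj1 H) (proj2 H)) as [m Hm]; simpl; exact Hm.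
  - exfalso; tauto.
Qed.

Lemma Rsup_max E M : E M -> (forall r, E r -> r <= M) -> Rsup E = M.
Proof.
  intros HM Hub. assert (Hl : is_lub E (Rsup E)).
  { apply Rsup_spec. exists M; exact Hub. exists M; exact HM. }
  destruct Hl as [H1 H2]. apply Rle_antisym. apply H2; exact Hub. apply H1; exact HM.
Qed.

Lemma Rsup_ub E r : bound E -> E r -> r <= Rsup E.
Proof. intros Hb Hr. destruct (Rsup_spec E Hb (ex_intro _ r Hr)) as [H1 _]. apply H1; exact Hr. Qed.

Lemma Rsup_le E M : (exists x, E x) -> (forall r, E r -> r <= M) -> Rsup E <= M.
Proof. intros He Hub. destruct (Rsup_spec E (ex_intro _ M Hub) He) as [_ H2]. apply H2; exact Hub. Qed.

Lemma Rsup_lt E r : bound E -> (exists x, E x) -> r < Rsup E -> exists s, E s /\ r < s.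
Proof.
  intros Hb He Hr. apply NNPP; intro Hn.
  assert (Rsup E <= r). { apply Rsup_le. exact He. intros s Hs.
    apply Rnot_lt_le; intro; apply Hn; exists s; auto. }
  lra.
Qed.

Lemma Rsup_eq1_ub E : Rsup E = 1 -> forall r, E r -> r <= 1.
Proof.
  unfold Rsup. destruct (excluded_middle_informative _) as [H|H].
  - destruct (completeness E (proj1 H) (proj2 H)) as [m Hm]; simpl. destruct Hm as [Hm _]. intros Heq r Hr. rewrite <- Heq. apply Hm, Hr.
  - intros; lra.
Qed.

Section Vec.
Variable X : NormedSpace.
Implicit Types u v w : X.

Lemma vscal0 u : vscal 0 u = vzero.
Proof. apply vnorm_zero. rewrite vnorm_scal, Rabs_R0. ring. Qed.

Lemma vscal_zero c : vscal c (@vzero X) = vzero.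
Proof. apply vnorm_zero. rewrite vnorm_scal. replace (vnorm (@vzero X)) with 0. ring.
  symmetry; apply vnorm_zero; reflexivity. Qed.

Lemma vnorm0 : vnorm (@vzero X) = 0.
Proof. apply vnorm_zero; reflexivity. Qed.

Lemma vsub_add u v : vadd (vsub u v) v = u.
Proof. unfold vsub. rewrite <- vadd_assoc. rewrite <- (vscal_one X v) at 2.
  rewrite <- vscal_distr_r. replace (-1+1) with 0 by ring. rewrite vscal0, vadd_zero. reflexivity. Qed.

Lemma vconv t u w : vadd (vscal (1-t) u) (vscal t (vadd u w)) = vadd u (vscal t w).
Proof. rewrite vscal_distr_l, vadd_assoc, <- vscal_distr_r.
  replace (1-t+t) with 1 by ring. rewrite vscal_one. reflexivity. Qed.
End Vec.

Section Op.
Variables X Y : NormedSpace.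

Lemma lin_zero (A : X -> Y) : bounded_linear X Y A -> A vzero = vzero.
Proof. intros [_ [Hs _]]. rewrite <- (vscal0 X vzero), Hs, vscal0. reflexivity. Qed.

Lemma opset_bound (A : X -> Y) : bounded_linear X Y A ->
  bound (fun r => exists x : X, vnorm x <= 1 /\ r = vnorm (A x)).
Proof. intros [_ [_ [C HC]]]. exists (Rabs C). intros r [x [Hx ->]].
  specialize (HC x). pose proof (vnorm_nonneg _ x). pose proof (Rle_abs C).
  pose proof (Rabs_pos C). nra. Qed.

Lemma opset_ne (A : X -> Y) : exists r, exists x : X, vnorm x <= 1 /\ r = vnorm (A x).
Proof. exists (vnorm (A vzero)). exists vzero. rewrite vnorm0. split; [lra|reflexivity]. Qed.

Lemma opnorm_nonneg (A : X -> Y) : bounded_linear X Y A -> 0 <= opnorm X Y A.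
Proof. intros HA. unfold opnorm. eapply Rle_trans; [|apply Rsup_ub; [apply opset_bound, HA|]].
  apply (vnorm_nonneg _ (A vzero)). exists vzero. rewrite vnorm0. split; [lra|reflexivity]. Qed.

Lemma opnorm_le (A : X -> Y) M : (forall x, vnorm x <= 1 -> vnorm (A x) <= M) -> opnorm X Y A <= M.
Proof. intros H. unfold opnorm. apply Rsup_le. apply opset_ne. intros r [x [Hx ->]]; auto. Qed.

Lemma opnorm_lt (A : X -> Y) r : bounded_linear X Y A -> r < opnorm X Y A ->
  exists x, vnorm x <= 1 /\ r < vnorm (A x).
Proof. intros HA Hr. destruct (Rsup_lt _ r (opset_bound A HA) (opset_ne A) Hr) as [s [[x [Hx ->]] Hs]].
  eauto. Qed.

Lemma opnorm_bound (A : X -> Y) x : bounded_linear X Y A -> vnorm (A x) <= opnorm X Y A * vnorm x.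
Proof.
  intros HA. pose proof (vnorm_nonneg _ x) as Hn.
  destruct (Req_dec (vnorm x) 0) as [H0|H0].
  - apply vnorm_zero in H0. subst x. rewrite lin_zero by auto. rewrite !vnorm0. lra.
  - set (m := vnorm x) in *. assert (Hm : 0 < m) by lra.
    assert (Hy : vnorm (A (vscal (/m) x)) <= opnorm X Y A).
    { unfold opnorm. apply Rsup_ub. apply opset_bound, HA. exists (vscal (/m) x). split; [|reflexivity].
      rewrite vnorm_scal, Rabs_pos_eq by (left; apply Rinv_0_lt_compat; lra). fold m. field_simplify; lra. }
    destruct HA as [_ [Hs _]]. rewrite Hs, vnorm_scal, Rabs_pos_eq in Hy by (left; apply Rinv_0_lt_compat; lra).
    apply (Rmult_le_compat_l m) in Hy; [|lra]. rewrite <- Rmult_assoc, Rinv_r in Hy by lra. lra.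
Qed.

Lemma bl_add (A B : X -> Y) : bounded_linear X Y A -> bounded_linear X Y B -> bounded_linear X Y (op_add X Y A B).
Proof.
  intros [Aa [As [CA HA]]] [Ba [Bs [CB HB]]]. unfold op_add. repeat split.
  - intros u v. rewrite Aa, Ba. rewrite <- !vadd_assoc. f_equal. rewrite !vadd_assoc. f_equal. apply vadd_comm.
  - intros a u. rewrite As, Bs, vscal_distr_l. reflexivity.
  - exists (CA + CB). intros x. eapply Rle_trans. apply vnorm_triangle. specialize (HA x). specialize (HB x). lra.
Qed.

Lemma bl_scal (A : X -> Y) c : bounded_linear X Y A -> bounded_linear X Y (op_scal X Y c A).
Proof.
  intros [Aa [As [CA HA]]]. unfold op_scal. repeat split.
  - intros u v. rewrite Aa, vscal_distr_l. reflexivity.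
  - intros a u. rewrite As, !vscal_assoc, Rmult_comm. reflexivity.
  - exists (Rabs c * CA). intros x. rewrite vnorm_scal. rewrite Rmult_assoc. apply Rmult_le_compat_l. apply Rabs_pos. auto.
Qed.
End Op.

Lemma dual_bound (V : Type) add scal (norm : V -> R) dom f :
  lin_functional V add scal dom f -> dual_norm V norm dom f = 1 ->
  (forall v, dom v -> 0 <= norm v) ->
  (forall v, dom v -> 0 < norm v -> dom (scal (/ norm v) v) /\ norm (scal (/norm v) v) <= 1) ->
  (forall v, dom v -> norm v <= 0 -> v = scal 0 v) ->
  forall v, dom v -> Rabs (f v) <= norm v.
Proof.
  intros [Fa Fs] Hd Hnn Hsc Hz v Hv.
  destruct (Rle_or_lt (norm v) 0) as [H|H].
  - rewrite (Hz v Hv H) at 1. rewrite Fs by exact Hv. rewrite Rmult_0_l, Rabs_R0. apply Hnn, Hv.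
  - destruct (Hsc v Hv H) as [H1 H2].
    assert (Hr' : Rabs (f (scal (/ norm v) v)) <= 1).
    { apply (Rsup_eq1_ub _ Hd). exists (scal (/ norm v) v). auto. }
    rewrite Fs in Hr' by exact Hv. rewrite Rabs_mult, Rabs_pos_eq in Hr' by (left; apply Rinv_0_lt_compat; lra).
    apply (Rmult_le_compat_l (norm v)) in Hr'; [|lra]. rewrite <- Rmult_assoc, Rinv_r in Hr' by lra. lra.
Qed.

Lemma dual_bound_Y (Y : NormedSpace) f y :
  lin_functional Y vadd vscal (fun _ => True) f -> dual_norm Y vnorm (fun _ => True) f = 1 ->
  Rabs (f y) <= vnorm y.
Proof.
  intros Hl Hd. apply (dual_bound Y vadd vscal vnorm (fun _ => True) f Hl Hd); auto.
  - intros; apply vnorm_nonneg.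
  - intros v _ Hp. split; auto. rewrite vnorm_scal, Rabs_pos_eq by (left; apply Rinv_0_lt_compat; lra).
    rewrite Rinv_l by lra. lra.
  - intros v _ H. pose proof (vnorm_nonneg _ v). assert (vnorm v = 0) by lra.
    apply vnorm_zero in H1. subst v. rewrite vscal_zero. reflexivity.
Qed.

Lemma opnorm_scal_le (X Y : NormedSpace) (A : X -> Y) c : bounded_linear X Y A ->
  opnorm X Y (op_scal X Y c A) <= Rabs c * opnorm X Y A.
Proof. intros HA. apply opnorm_le. intros x Hx. unfold op_scal. rewrite vnorm_scal.
  apply Rmult_le_compat_l. apply Rabs_pos. eapply Rle_trans. apply opnorm_bound, HA.
  pose proof (opnorm_nonneg _ _ A HA). pose proof (vnorm_nonneg _ x). nra. Qed.

Lemma dual_bound_op (X Y : NormedSpace) G A :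
  lin_functional (X -> Y) (op_add X Y) (op_scal X Y) (bounded_linear X Y) G ->
  dual_norm (X -> Y) (opnorm X Y) (bounded_linear X Y) G = 1 ->
  bounded_linear X Y A -> Rabs (G A) <= opnorm X Y A.
Proof.
  intros Hl Hd HA. apply (dual_bound (X -> Y) (op_add X Y) (op_scal X Y) (opnorm X Y) _ G Hl Hd); auto.
  - apply opnorm_nonneg.
  - intros B HB Hp. split. apply bl_scal, HB. eapply Rle_trans. apply opnorm_scal_le, HB.
    rewrite Rabs_pos_eq by (left; apply Rinv_0_lt_compat; lra). rewrite Rinv_l by lra. lra.
  - intros B HB H. apply functional_extensionality. intros x. unfold op_scal. rewrite vscal0.
    apply vnorm_zero. pose proof (opnorm_bound _ _ B x HB). pose proof (vnorm_nonneg _ x).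
    pose proof (vnorm_nonneg _ (B x)). pose proof (opnorm_nonneg _ _ B HB). nra.
Qed.

Lemma key (X Y : NormedSpace) (T : X -> Y) (x0 : X) G D :
  bounded_linear X Y T ->
  vnorm (T x0) = opnorm X Y T ->
  (forall xs : nat -> X,
     (forall n, vnorm (xs n) = 1) ->
     Un_cv (fun n => vnorm (T (xs n))) (opnorm X Y T) ->
     exists (phi : nat -> nat) (a : R),
       (forall n, (phi n < phi (S n))%nat) /\ Rabs a = 1 /\
       Un_cv (fun n => vnorm (vsub (xs (phi n)) (vscal a x0))) 0) ->
  lin_functional (X -> Y) (op_add X Y) (op_scal X Y) (bounded_linear X Y) G ->
  (forall A, bounded_linear X Y A -> Rabs (G A) <= opnorm X Y A) ->
  G T = opnorm X Y T ->
  bounded_linear X Y D -> D x0 = vzero -> G D <= 0.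
Proof.
  intros HT HTx0 Hiii [Ga Gs] HGb GT HD HDx0.
  apply Rnot_lt_le; intro He. set (e := G D) in *. set (N := opnorm X Y T) in *.
  set (ob := opnorm X Y D).
  assert (HN : 0 <= N) by (apply opnorm_nonneg, HT).
  assert (Hob : 0 <= ob) by (apply opnorm_nonneg, HD).
  assert (Hstep : forall n : nat, exists y, vnorm y = 1 /\ N - ob * / (INR n + 2) <= vnorm (T y) /\
     vnorm (T y) <= N /\ N + e/2 < vnorm (vadd (T y) (D y))).
  { intro n. pose proof (pos_INR n) as Hn.
    set (t := / (INR n + 2)).
    assert (Ht0 : 0 < t) by (apply Rinv_0_lt_compat; lra).
    assert (Ht1 : t * (INR n + 2) = 1) by (unfold t; field; lra).
    assert (Ht2 : t < 1) by nra.
    set (At := op_add X Y T (op_scal X Y t D)).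
    assert (HAt : bounded_linear X Y At) by (apply bl_add; [exact HT | apply bl_scal, HD]).
    assert (HGAt : G At = N + t * e).
    { unfold At. rewrite Ga by (auto; apply bl_scal, HD). rewrite Gs by exact HD. rewrite GT. reflexivity. }
    assert (Hlt : N + t * e / 2 < opnorm X Y At).
    { pose proof (HGb At HAt). pose proof (Rle_abs (G At)). nra. }
    destruct (opnorm_lt _ _ At _ HAt Hlt) as [x [Hx Hxlt]].
    set (m := vnorm x) in *.
    assert (Hm : 0 < m).
    { destruct (Rle_or_lt m 0) as [H|H]; [|exact H]. exfalso.
      pose proof (opnorm_bound _ _ At x HAt). pose proof (opnorm_nonneg _ _ At HAt).
      pose proof (vnorm_nonneg _ x). fold m in H0. nra. }
    set (y := vscal (/m) x).
    assert (Hy1 : vnorm y = 1).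
    { unfold y. rewrite vnorm_scal, Rabs_pos_eq by (left; apply Rinv_0_lt_compat; lra). fold m. field. lra. }
    assert (HAy : N + t * e / 2 < vnorm (At y)).
    { destruct HAt as [_ [HAs _]]. unfold y. rewrite HAs, vnorm_scal, Rabs_pos_eq by (left; apply Rinv_0_lt_compat; lra).
      assert (1 <= / m). { rewrite <- Rinv_1. apply Rinv_le_contravar; lra. }
      pose proof (vnorm_nonneg _ (At x)). nra. }
    unfold At, op_add, op_scal in HAy.
    exists y. split; [exact Hy1|].
    pose proof (opnorm_bound _ _ D y HD) as HDy. fold ob in HDy. rewrite Hy1 in HDy.
    pose proof (opnorm_bound _ _ T y HT) as HTy. fold N in HTy. rewrite Hy1 in HTy.
    assert (B1 : vnorm (vadd (T y) (vscal t (D y))) <= vnorm (T y) + t * vnorm (D y)).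
    { eapply Rle_trans. apply vnorm_triangle. rewrite vnorm_scal, Rabs_pos_eq by lra. lra. }
    assert (B2 : vnorm (vadd (T y) (vscal t (D y))) <= (1 - t) * vnorm (T y) + t * vnorm (vadd (T y) (D y))).
    { rewrite <- vconv. eapply Rle_trans. apply vnorm_triangle. rewrite !vnorm_scal, !Rabs_pos_eq by lra. lra. }
    repeat split; nra. }
  set (xs := fun n => proj1_sig (constructive_indefinite_description _ (Hstep n))).
  assert (Hxs : forall n, vnorm (xs n) = 1 /\ N - ob * / (INR n + 2) <= vnorm (T (xs n)) /\
     vnorm (T (xs n)) <= N /\ N + e/2 < vnorm (vadd (T (xs n)) (D (xs n)))).
  { intro n. unfold xs. exact (proj2_sig (constructive_indefinite_description _ (Hstep n))). }
  destruct (Hiii xs) as [phi [a [_ [Ha Hcv]]]].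
  { intro n. apply Hxs. }
  { intros eps Heps. destruct (archimed_cor1 (eps / (ob + 1))) as [K [HK HK0]].
    { apply Rdiv_lt_0_compat; lra. }
    exists K. intros n Hn. unfold R_dist. destruct (Hxs n) as [_ [H1 [H2 _]]].
    assert (HKp : 0 < INR K) by (apply lt_0_INR; lia).
    assert (HKn : INR K <= INR n) by (apply le_INR; lia).
    assert (Hinv : / (INR n + 2) <= / INR K) by (apply Rinv_le_contravar; lra).
    assert (Hq : ob * / INR K <= ob * (eps / (ob + 1))) by (apply Rmult_le_compat_l; lra).
    assert (Hq2 : ob * (eps / (ob + 1)) < eps).
    { unfold Rdiv. rewrite <- Rmult_assoc. apply (Rmult_lt_reg_r (ob + 1)); [lra|].
      rewrite Rmult_assoc, Rinv_l by lra. nra. }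
    assert (ob * / (INR n + 2) <= ob * / INR K) by (apply Rmult_le_compat_l; lra).
    apply Rabs_def1; lra. }
  set (C := op_add X Y T D).
  assert (HC : bounded_linear X Y C) by (apply bl_add; assumption).
  set (c := opnorm X Y C).
  assert (Hc : 0 <= c) by (apply opnorm_nonneg, HC).
  destruct (Hcv (e / 2 / (c + 1))) as [K HK].
  { apply Rdiv_lt_0_compat; lra. }
  specialize (HK K (le_n K)). unfold R_dist in HK. rewrite Rminus_0_r, Rabs_pos_eq in HK by apply vnorm_nonneg.
  set (z := xs (phi K)) in *. set (w := vscal a x0) in *.
  destruct (Hxs (phi K)) as [_ [_ [_ Hz]]]. fold z in Hz.
  assert (HCz : C z = vadd (C (vsub z w)) (C w)).
  { destruct HC as [HCa _]. rewrite <- HCa, vsub_add. reflexivity. }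
  assert (HCw : vnorm (C w) = N).
  { unfold C, op_add, w. destruct HT as [_ [HTs _]]. destruct HD as [_ [HDs _]].
    rewrite HTs, HDs, HDx0, vscal_zero, vadd_zero, vnorm_scal, Ha, HTx0. ring. }
  assert (Hd : c * vnorm (vsub z w) < e / 2).
  { assert (c * vnorm (vsub z w) <= c * (e / 2 / (c + 1))) by (apply Rmult_le_compat_l; lra).
    assert (c * (e / 2 / (c + 1)) < e / 2).
    { unfold Rdiv. rewrite <- Rmult_assoc. apply (Rmult_lt_reg_r (c + 1)); [lra|].
      rewrite (Rmult_assoc _ (/ (c+1))), Rinv_l by lra. nra. }
    lra. }
  assert (vnorm (C z) <= c * vnorm (vsub z w) + N).
  { rewrite HCz. eapply Rle_trans. apply vnorm_triangle. rewrite HCw.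
    pose proof (opnorm_bound _ _ C (vsub z w) HC). fold c in H. lra. }
  unfold C, op_add in H. lra.
Qed.

Theorem theorem3p4 (X Y : NormedSpace) (T : X -> Y) (x0 : X) :
  bounded_linear X Y T ->
  vnorm x0 = 1 ->
  (forall x : X, norm_attainment_set X Y T x <-> (x = x0 \/ x = vscal (-1) x0)) ->
  smooth_point Y (T x0) ->
  (forall xs : nat -> X,
     (forall n, vnorm (xs n) = 1) ->
     Un_cv (fun n => vnorm (T (xs n))) (opnorm X Y T) ->
     exists (phi : nat -> nat) (a : R),
       (forall n, (phi n < phi (S n))%nat) /\ Rabs a = 1 /\
       Un_cv (fun n => vnorm (vsub (xs (phi n)) (vscal a x0))) 0) ->
  smooth_operator X Y T.
Proof.
  intros HT Hx0 Hi Hii Hiii.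
  destruct Hii as [_ [Hy0 [g [[Hgl [Hgb [Hgd Hgv]]] Hgu]]]].
  assert (HM : vnorm (T x0) = opnorm X Y T) by (apply (proj2 (Hi x0)); left; reflexivity).
  set (N := opnorm X Y T) in *.
  assert (HN : 0 < N).
  { pose proof (vnorm_nonneg _ (T x0)). destruct (Req_dec (vnorm (T x0)) 0) as [H0|H0].
    - apply vnorm_zero in H0. contradiction.
    - lra. }
  assert (Hg1 : forall y, Rabs (g y) <= vnorm y) by (intro; apply dual_bound_Y; assumption).
  pose proof Hgl as [ga gs].
  unfold smooth_operator, smooth_gen. split; [exact HT|]. split.
  { intro H. apply Hy0. change (T x0 = op_zero X Y x0). rewrite H. reflexivity. }
  exists (fun A => g (A x0)). split.
  - split; [|split; [|split]].
    + split; intros; [unfold op_add; apply ga | unfold op_scal; apply gs]; exact I.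
    + exists 1. intros A HA. eapply Rle_trans. apply Hg1. rewrite Rmult_1_l.
      eapply Rle_trans. apply opnorm_bound, HA. rewrite Hx0; lra.
    + unfold dual_norm. apply Rsup_max.
      * exists (op_scal X Y (/N) T). split; [apply bl_scal, HT|]. split.
        -- eapply Rle_trans. apply opnorm_scal_le, HT. fold N.
           rewrite Rabs_pos_eq by (left; apply Rinv_0_lt_compat; lra). rewrite Rinv_l by lra. lra.
        -- unfold op_scal. rewrite gs by exact I. rewrite Hgv, HM, Rinv_l by lra. rewrite Rabs_R1. reflexivity.
      * intros r [A [HA [Hle ->]]]. eapply Rle_trans. apply Hg1. eapply Rle_trans. apply opnorm_bound, HA.
        rewrite Hx0. lra.
    + cbv beta. rewrite Hgv. exact HM.
  - intros G [Gl [_ [Gd GT]]] B HB. cbv beta.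
    assert (HG1 : forall A, bounded_linear X Y A -> Rabs (G A) <= opnorm X Y A)
      by (intros; apply dual_bound_op; assumption).
    pose proof Gl as [Ga Gs].
    assert (HK : forall D, bounded_linear X Y D -> D x0 = vzero -> G D <= 0)
      by (intros D HD HDx0; exact (key X Y T x0 G D HT HM Hiii Gl HG1 GT HD HDx0)).
    assert (Hdep : forall B C, bounded_linear X Y B -> bounded_linear X Y C -> B x0 = C x0 -> G B = G C).
    { intros B1 C1 HB1 HC1 HBC.
      assert (H1 : G (op_add X Y B1 (op_scal X Y (-1) C1)) <= 0).
      { apply HK. apply bl_add; [|apply bl_scal]; assumption.
        unfold op_add, op_scal. rewrite HBC. apply vadd_opp. }
      assert (H2 : G (op_add X Y C1 (op_scal X Y (-1) B1)) <= 0).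
      { apply HK. apply bl_add; [|apply bl_scal]; assumption.
        unfold op_add, op_scal. rewrite HBC. apply vadd_opp. }
      rewrite Ga, Gs in H1, H2 by (auto; apply bl_scal; auto). lra. }
    set (ph := fun x => g (T x) / N).
    set (R := fun (z : Y) (x : X) => vscal (ph x) z).
    assert (Hph : forall x, Rabs (ph x) <= vnorm x).
    { intro x. unfold ph, Rdiv. rewrite Rabs_mult, (Rabs_pos_eq (/N)) by (left; apply Rinv_0_lt_compat; lra).
      pose proof (Hg1 (T x)). pose proof (opnorm_bound _ _ T x HT). fold N in H0.
      apply (Rmult_le_reg_r N); [lra|]. rewrite Rmult_assoc, Rinv_l by lra. nra. }
    destruct HT as [Ta [Ts Tb]].
    assert (HR : forall z, bounded_linear X Y (R z)).
    { intro z. unfold R. repeat split.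
      - intros u v. rewrite <- vscal_distr_r. f_equal. unfold ph. rewrite Ta, ga by exact I. field. lra.
      - intros a u. rewrite vscal_assoc. f_equal. unfold ph. rewrite Ts, gs by exact I. field. lra.
      - exists (vnorm z). intros x. rewrite vnorm_scal. pose proof (Hph x). pose proof (vnorm_nonneg _ z). nra. }
    assert (HRn : forall z, opnorm X Y (R z) <= vnorm z).
    { intro z. apply opnorm_le. intros x Hx. unfold R. rewrite vnorm_scal.
      pose proof (Hph x). pose proof (vnorm_nonneg _ z). pose proof (Rabs_pos (ph x)). nra. }
    assert (HRx0 : forall z, R z x0 = z).
    { intro z. unfold R, ph. rewrite Hgv, HM. unfold Rdiv. rewrite Rinv_r by lra. apply vscal_one. }
    assert (HTbl : bounded_linear X Y T) by (repeat split; assumption).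
    assert (HGB : forall B, bounded_linear X Y B -> G B = G (R (B x0))).
    { intros B1 HB1. apply Hdep; [exact HB1 | apply HR | rewrite HRx0; reflexivity]. }
    set (psi := fun z => G (R z)).
    assert (Hpsi : support_functional Y vadd vscal vnorm (fun _ => True) psi (T x0)).
    { split; [|split; [|split]].
      - split.
        + intros u v _ _. unfold psi. replace (R (vadd u v)) with (op_add X Y (R u) (R v)).
          apply Ga; auto. apply functional_extensionality. intro x. unfold op_add, R. symmetry. apply vscal_distr_l.
        + intros a u _. unfold psi. replace (R (vscal a u)) with (op_scal X Y a (R u)).
          apply Gs; auto. apply functional_extensionality. intro x. unfold op_scal, R.
          rewrite !vscal_assoc, Rmult_comm. reflexivity.
      - exists 1. intros v _. unfold psi. rewrite Rmult_1_l. eapply Rle_trans. apply HG1, HR. apply HRn.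
      - unfold dual_norm. apply Rsup_max.
        + exists (vscal (/N) (T x0)). split; [exact I|]. split.
          * rewrite vnorm_scal, Rabs_pos_eq, HM, Rinv_l by (try (left; apply Rinv_0_lt_compat); lra). lra.
          * unfold psi. change (G (R (vscal (/N) (T x0)))) with (G (R (op_scal X Y (/N) T x0))).
            rewrite <- (HGB _ (bl_scal _ _ T _ HTbl)).
            rewrite Gs by exact HTbl. rewrite GT. fold N. rewrite Rinv_l by lra. rewrite Rabs_R1. reflexivity.
        + intros r [v [_ [Hv ->]]]. unfold psi. eapply Rle_trans. apply HG1, HR. eapply Rle_trans. apply HRn. exact Hv.
      - unfold psi. rewrite <- (HGB T HTbl). rewrite GT, HM. reflexivity. }
    rewrite HGB by exact HB. change (psi (B x0) = g (B x0)). apply Hgu; [exact Hpsi | exact I].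
Qed.
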